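(* Let $R$ be a uniparameter QNA satisfying Hypothesis (H), with $C$ as in that hypothesis. For each $k\in[1,N]\setminus C$, the quantum torus $\mathcal Q_k$ generated by $\{y_i^{\pm1}: i\in[1,N]\setminus(C\cup\{k\})\}$ contains a non-trivial central monomial $\prod_{i\in[1,N]\setminus(C\cup\{k\})}y_i^{m_i}$, i.e. one with at least one $m_i\neq0$.
   Context: ${\mathbb K}$ is a field of characteristic $0$. A quantum nilpotent algebra (QNA) is an iterated Ore extension $R={\mathbb K}[x_1][x_2;\sigma_2,\delta_2]\cdots[x_N;\sigma_N,\delta_N]$, where $R_k={\mathbb K}[x_1][x_2;\sigma_2,\delta_2]\cdots[x_k;\sigma_k,\delta_k]$ ($R_0={\mathbb K}$), $\sigma_k$ is a ${\mathbb K}$-automorphism and $\delta_k$ a $\sigma_k$-derivation of $R_{k-1}$, together with a torus $\mathcal H$ acting rationally by ${\mathbb K}$-automorphisms on $R$ with each $x_i$ an $\mathcal H$-eigenvector, such that: (i) $\sigma_k(x_j)=\lambda_{kj}x_j$ for $j<k$, with $\lambda_{kj}\in{\mathbb K}^*$; (ii) $\delta_k$ is locally nilpotent on $R_{k-1}$; (iii) for each $k$ there exist $h_k\in\mathcal H$ and $q_k\in{\mathbb K}^*$ not a root of unity such that $h_k$ acts on $R_{k-1}$ as $\sigma_k$ and $h_k\cdot x_k=q_kx_k$. It is uniparameter if there are $q\in{\mathbb K}^*$ not a root of unity and a skew-symmetric integer matrix $(a_{ij})$ with $\lambda_{kj}=q^{a_{kj}}$ for all $j<k$. The rank is $n=|\{k:\delta_k=0\}|$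 and $\mathcal H=({\mathbb K}^* )^n$ is taken maximal. Homogeneous elements are the $\mathcal H$-eigenvectors. Goodearl–Yakimov elements: there is a surjective map $\mu:[1,N]\to[1,n]$ with predecessor $p(k)=\max\{j<k:\mu(j)=\mu(k)\}$ (or $-\infty$) and successor $s(k)=\min\{j>k:\mu(j)=\mu(k)\}$ (or $+\infty$), and homogeneous elements $y_1,\ldots,y_N\in R$, uniquely determined, with $y_k=x_k$ if $p(k)=-\infty$ and $y_k=y_{p(k)}x_k-c_k$ for some $c_k\in R_{k-1}$ otherwise, such that for every $k$ the set $\{y_j:j\le k,\ s(j)>k\}$ is, up to nonzero scalars, the set of homogeneous prime elements (nonzero normal elements $p$ with $pR$ completely prime) of $R_k$. They satisfy $y_jy_i=q_{ij}y_iy_j$ with $q_{ij}$ powers of $q$; $\mathcal A_{\mathbf q}\subseteq R$ is the quantum affine space they generate and $\mathcal T_{\mathbf q}=R[y_1^{-1},\ldots,y_N^{-1}]$ the associated quantum torus. Let $\mathfrak s_{+\infty}=\{k:s(k)=+\infty\}$. The center $\operatorname{Z}(\mathcal T_{\mathbf q})$ is a Laurent polynomial ring ${\mathbb K}[z_1^{\pm1},\ldots,z_\ell^{\pm1}]$ whose generators can be chosen to be Laurent monomials in the $y_j$, $j\in\mathfrak s_{+\infty}$; for such a monomial $z$, $\operatorname{supp}z$ is the set of $j\in\mathfrak s_{+\infty}$ whose exponent in $z$ is nonzero. Hypothesis (H): there exist such monomial generators $z_1,\ldots,z_\ell$ of $\operatorname{Z}(\mathcal T_{\mathbf q})$ and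 a subset $C=\{c_1,\ldots,c_\ell\}\subseteq\mathfrak s_{+\infty}$ with $|C|=\ell$ such that for all $i\in[1,\ell]$: (H1) $z_i\in\mathcal A_{\mathbf q}$; (H2) the exponent of $y_{c_j}$ in $z_i$ is $\delta_{ij}$ for all $j$; (H3) if $|\operatorname{supp}z_i|\ge2$ then $\operatorname{supp}z_i\setminus\{c_i\}\not\subseteq\bigcup_{j\neq i}\operatorname{supp}z_j$. *)

(* Defs.v *)
(* Quantum nilpotent algebras (QNAs), Goodearl-Yakimov
   elements and Hypothesis (H), all living inside an ambient K-algebra T
   which plays the role of the quantum torus T_q = R[y_1^-1,...,y_N^-1].
   Indices of generators x_k, y_k run over [1,N] (nat), as in the paper. *)
From HB Require Import structures.
From mathcomp Require Import all_boot all_order all_algebra.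
Set Implicit Arguments. Unset Strict Implicit. Unset Printing Implicit Defensive.
Import Order.TTheory GRing.Theory Num.Theory.
Local Open Scope ring_scope.

Section QNADefs.
Variables (K : fieldType) (T : unitAlgType K).

Inductive subalg_gen (S : T -> Prop) : T -> Prop :=
| sg_gen t : S t -> subalg_gen S t
| sg_scal (c : K) : subalg_gen S (c%:A)
| sg_add a b : subalg_gen S a -> subalg_gen S b -> subalg_gen S (a + b)
| sg_mul a b : subalg_gen S a -> subalg_gen S b -> subalg_gen S (a * b).

Definition Rk (x : nat -> T) (k : nat) : T -> Prop :=
  subalg_gen (fun t => exists2 j, (1 <= j <= k)%N & t = x j).

Definition alg_auto_on (A : T -> Prop) (f : T -> T) : Prop :=
  [/\ forall a, A a -> A (f a),
      forall b, A b -> exists2 a, A a & f a = b &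
      forall a b, A a -> A b -> f a = f b -> a = b] /\
  [/\ forall (c : K) a b, A a -> A b -> f (c *: a + b) = c *: f a + f b,
      forall a b, A a -> A b -> f (a * b) = f a * f b &
      f 1 = 1].

Definition skew_derivation_on (A : T -> Prop) (sg d : T -> T) : Prop :=
  [/\ forall a, A a -> A (d a),
      forall (c : K) a b, A a -> A b -> d (c *: a + b) = c *: d a + d b &
      forall a b, A a -> A b -> d (a * b) = sg a * d b + d a * b].

(* R_k = R_{k-1}[x_k; sigma_k, delta_k] : R_k is generated by R_{k-1} and x_k
   (by definition of Rk), x_k r = sigma_k(r) x_k + delta_k(r) for r in R_{k-1},
   and the powers of x_k are left R_{k-1}-linearly independent. *)
Definition ore_step (x : nat -> T) (k : nat) (sg d : T -> T) : Prop :=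
  [/\ alg_auto_on (Rk x k.-1) sg,
      skew_derivation_on (Rk x k.-1) sg d,
      forall r, Rk x k.-1 r -> x k * r = sg r * x k + d r &
      forall cs : seq T, (forall r, r \in cs -> Rk x k.-1 r) ->
        \sum_(i < size cs) cs`_i * x k ^+ i = 0 -> all (fun r => r == 0) cs].

Definition not_root_of_unity (c : K) : Prop :=
  forall m : nat, (0 < m)%N -> c ^+ m != 1.

Definition torus_elt (n : nat) (h : 'I_n -> K) : Prop := forall i, h i != 0.

Definition chr (n : nat) (wi : 'I_n -> int) (h : 'I_n -> K) : K :=
  \prod_(j < n) h j ^ wi j.

Definition rational_torus_action (x : nat -> T) (N n : nat)
    (act : ('I_n -> K) -> T -> T) (w : nat -> 'I_n -> int) : Prop :=
  [/\ forall h, torus_elt h -> alg_auto_on (Rk x N) (act h),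
      forall r, Rk x N r -> act (fun _ => 1) r = r,
      forall g h r, torus_elt g -> torus_elt h -> Rk x N r ->
        act (fun j => g j * h j) r = act g (act h r) &
      forall h i, torus_elt h -> (1 <= i <= N)%N ->
        act h (x i) = chr (w i) h *: x i].

Definition uniparameter_QNA (x : nat -> T) (N : nat) (sg d : nat -> T -> T)
    (lam : nat -> nat -> K) (q : K) (a : nat -> nat -> int) (n : nat)
    (act : ('I_n -> K) -> T -> T) (w : nat -> 'I_n -> int) : Prop :=
  [/\
      forall k, (1 <= k <= N)%N -> ore_step x k (sg k) (d k),
      forall k j, (1 <= j)%N -> (j < k <= N)%N -> sg k (x j) = lam k j *: x j,
      forall k r, (1 <= k <= N)%N -> Rk x k.-1 r ->
        exists m, iter m (d k) r = 0 &
      rational_torus_action x N act w] /\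
  [/\
      forall k, (1 <= k <= N)%N -> exists h, [/\ torus_elt h,
        forall r, Rk x k.-1 r -> act h r = sg k r &
        not_root_of_unity (chr (w k) h)],
      [/\ q != 0, not_root_of_unity q,
          forall i j, a i j = - a j i &
          forall k j, (1 <= j)%N -> (j < k <= N)%N -> lam k j = q ^ a k j] &
      exists s : seq nat, [/\ uniq s, size s = n &
        forall k, k \in s <->
          ((1 <= k <= N)%N /\ forall r, Rk x k.-1 r -> d k r = 0)]].

Definition homogeneous (n : nat) (act : ('I_n -> K) -> T -> T) (t : T) : Prop :=
  t != 0 /\ forall h, torus_elt h -> exists c : K, act h t = c *: t.

(* prime element of the subalgebra A: nonzero normal element p of A such that
   the (two-sided) ideal pA = Ap of A is completely prime *)
Definition prime_elt (A : T -> Prop) (p : T) : Prop :=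
  [/\ A p, p != 0 &
      forall a, A a -> exists2 b, A b & p * a = b * p] /\
  [/\ forall a, A a -> exists2 b, A b & a * p = p * b,
      ~ (exists2 c, A c & p * c = 1) &
      forall a b, A a -> A b -> (exists2 c, A c & a * b = p * c) ->
        (exists2 c, A c & a = p * c) \/ (exists2 c, A c & b = p * c)].

(* predecessor p(k) = max{1 <= j < k : mu j = mu k}, with 0 encoding -oo *)
Definition predk (mu : nat -> nat) (k : nat) : nat :=
  last 0%N [seq j <- iota 1 k.-1 | mu j == mu k].

(* s(j) > k  (s(j) = min{j' > j : mu j' = mu j} or +oo) *)
Definition succ_gt (mu : nat -> nat) (j k : nat) : bool :=
  ~~ has (fun j' => mu j' == mu j) (iota j.+1 (k - j)).

Definition succ_inf (mu : nat -> nat) (N j : nat) : bool :=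
  (1 <= j <= N)%N && succ_gt mu j N.

Definition GY_elements (x : nat -> T) (N n : nat)
    (act : ('I_n -> K) -> T -> T) (mu : nat -> nat) (y : nat -> T) : Prop :=
  [/\ forall k, (1 <= k <= N)%N -> (1 <= mu k <= n)%N,
      forall i, (1 <= i <= n)%N -> exists2 k, (1 <= k <= N)%N & mu k = i,
      forall k, (1 <= k <= N)%N -> homogeneous act (y k),
      forall k, (1 <= k <= N)%N ->
        if predk mu k == 0%N then y k = x k
        else exists2 c, Rk x k.-1 c & y k = y (predk mu k) * x k - c &
      forall k, (1 <= k <= N)%N ->
        (forall j, (1 <= j <= k)%N -> succ_gt mu j k ->
           homogeneous act (y j) /\ prime_elt (Rk x k) (y j)) /\
        (forall p, homogeneous act p -> prime_elt (Rk x k) p ->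
           exists j, exists2 c : K, [/\ (1 <= j <= k)%N, succ_gt mu j k & c != 0]
             & p = c *: y j)].

Definition lmon (y : nat -> T) (N : nat) (m : nat -> int) : T :=
  \prod_(i <- iota 1 N) y i ^ m i.

Definition lmon_independent (y : nat -> T) (N : nat) : Prop :=
  forall (cs : seq K) (ms : seq (nat -> int)), size cs = size ms ->
    (forall t t', (t < t' < size ms)%N ->
       exists2 i, (1 <= i <= N)%N & nth (fun _ => 0) ms t i <> nth (fun _ => 0) ms t' i) ->
    \sum_(t < size cs) cs`_t *: lmon y N (nth (fun _ => 0) ms t) = 0 ->
    all (fun c => c == 0) cs.

Definition assoc_quantum_torus (x : nat -> T) (N : nat) (q : K) (y : nat -> T) : Prop :=
  [/\ forall i, (1 <= i <= N)%N -> y i \is a GRing.unit,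
      forall t, subalg_gen (fun u => Rk x N u \/
                   exists2 j, (1 <= j <= N)%N & u = (y j)^-1) t,
      exists b : nat -> nat -> int, forall i j, (1 <= i <= N)%N -> (1 <= j <= N)%N ->
        y j * y i = q ^ b i j *: (y i * y j),
      forall t, subalg_gen (fun u => exists2 j, (1 <= j <= N)%N &
                   u = y j \/ u = (y j)^-1) t &
      lmon_independent y N].

Definition central_in (A : T -> Prop) (t : T) : Prop :=
  forall u, A u -> t * u = u * t.

(* Hypothesis (H) with data: l, z_i = lmon y N (e i) for i in [1,l],
   C = {c_1,...,c_l}. *)
Definition hypothesisH (x : nat -> T) (N : nat) (mu : nat -> nat) (y : nat -> T)
    (l : nat) (e : nat -> nat -> int) (c : nat -> nat) : Prop :=
  let z i := lmon y N (e i) in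
  let inS i j := succ_inf mu N j && (e i j != 0) in
  [/\
      forall i j, (1 <= i <= l)%N -> ~~ succ_inf mu N j -> e i j = 0,
      [/\ forall i, (1 <= i <= l)%N -> central_in (fun _ => True) (z i),
          forall t, central_in (fun _ => True) t ->
            subalg_gen (fun u => exists2 i, (1 <= i <= l)%N &
                            u = z i \/ u = (z i)^-1) t &
          lmon_independent z l],
      (forall i, (1 <= i <= l)%N -> succ_inf mu N (c i)) /\
      (forall i j, (1 <= i <= l)%N -> (1 <= j <= l)%N -> c i = c j -> i = j),
      forall i, (1 <= i <= l)%N ->
        subalg_gen (fun u => exists2 j, (1 <= j <= N)%N & u = y j) (z i) &
      (forall i j, (1 <= i <= l)%N -> (1 <= j <= l)%N ->
        e i (c j) = (i == j)%:R) /\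
      (forall i, (1 <= i <= l)%N ->
        (exists j1 j2, [/\ inS i j1, inS i j2 & j1 <> j2]) ->
        exists2 j, inS i j && (j != c i) &
          forall i', (1 <= i' <= l)%N -> i' <> i -> ~~ inS i' j)].

End QNADefs.

(* Main.v *)
Require Import Defs.
From HB Require Import structures.
From mathcomp Require Import all_boot all_order all_algebra zify ring lra.
Set Implicit Arguments. Unset Strict Implicit. Unset Printing Implicit Defensive.
Import Order.TTheory GRing.Theory Num.Theory.
Local Open Scope ring_scope.
Section Alg.
Variables (K : fieldType) (T : unitAlgType K).
Lemma comm_natpow (X Y : T) (a : K) : X * Y = a *: (Y * X) ->
  forall n m : nat, X ^+ n * Y ^+ m = a ^+ (n * m) *: (Y ^+ m * X ^+ n).
Proof.
move=> hXY.
have h1 : forall m, X * Y ^+ m = a ^+ m *: (Y ^+ m * X).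
  elim=> [|m IH]; first by rewrite !expr0 mulr1 mul1r scale1r.
  rewrite exprSr mulrA IH -scalerAl -[Y ^+ m * X * Y]mulrA hXY -scalerAr scalerA.
  by rewrite !mulrA -!exprSr.
elim=> [|n IH] m; first by rewrite !expr0 mulr1 mul1r scale1r.
rewrite exprS -mulrA IH -scalerAr [X * (_ * _)]mulrA h1 -scalerAl scalerA -[Y ^+ m * X * _]mulrA -exprS.
by rewrite mulSn exprD mulrC.
Qed.

Lemma comm_inv (X Y : T) (a : K) : a != 0 -> X \is a GRing.unit ->
  X * Y = a *: (Y * X) -> X^-1 * Y = a^-1 *: (Y * X^-1).
Proof.
move=> ha hX hXY.
have -> : Y * X^-1 = a *: (X^-1 * Y).
  apply: (mulrI hX). rewrite -scalerAr mulrA hXY -scalerAl mulrK // mulVKr //.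
by rewrite scalerA mulVf // scale1r.
Qed.

Lemma comm_inv2 (X Y : T) (a : K) : a != 0 -> Y \is a GRing.unit ->
  X * Y = a *: (Y * X) -> X * Y^-1 = a^-1 *: (Y^-1 * X).
Proof.
move=> ha hY hXY.
have hYX : Y * X = a^-1 *: (X * Y) by rewrite hXY scalerA mulVf // scale1r.
have := comm_inv (invr_neq0 ha) hY hYX. rewrite invrK => ->.
by rewrite scalerA mulVf // scale1r.
Qed.

Variable q : K.
Hypothesis qnz : q != 0.

Lemma comm_intpow (X Y : T) (s : int) : X \is a GRing.unit -> Y \is a GRing.unit ->
  X * Y = q ^ s *: (Y * X) ->
  forall n m : int, X ^ n * Y ^ m = q ^ (s * n * m) *: (Y ^ m * X ^ n).
Proof.
move=> hX hY hXY.
have hqs : forall t : int, q ^ t != 0 by move=> t; rewrite expfz_neq0.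
have key : forall (X' Y' : T) (s' : int) (n' m' : nat), X' * Y' = q ^ s' *: (Y' * X') ->
   X' ^+ n' * Y' ^+ m' = q ^ (s' * n'%:Z * m'%:Z) *: (Y' ^+ m' * X' ^+ n').
  move=> X' Y' s' n' m' h. rewrite (comm_natpow h) -mulrA -PoszM -exprz_exp.
  by [].
have hXi : X^-1 * Y = q ^ (- s) *: (Y * X^-1) by rewrite (comm_inv _ hX hXY) ?hqs // invr_expz.
have hYi : X * Y^-1 = q ^ (- s) *: (Y^-1 * X) by rewrite (comm_inv2 _ hY hXY) ?hqs // invr_expz.
have hXYi : X^-1 * Y^-1 = q ^ s *: (Y^-1 * X^-1).
  by rewrite (comm_inv2 _ _ hXi) ?hqs ?unitrV // invr_expz opprK.
have eN : forall (Z : T) n, Z ^ (Negz n) = Z^-1 ^+ n.+1 by move=> Z n; rewrite exprVn.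
have eP : forall (Z : T) n, Z ^ (Posz n) = Z ^+ n by [].
case=> n [] m; rewrite ?eN ?eP.
- by rewrite (key _ _ _ _ _ hXY).
- rewrite (key _ _ _ _ _ hYi). congr (q ^ _ *: _); rewrite NegzE; lia.
- rewrite (key _ _ _ _ _ hXi). congr (q ^ _ *: _); rewrite NegzE; lia.
- rewrite (key _ _ _ _ _ hXYi). congr (q ^ _ *: _); rewrite !NegzE; lia.
Qed.
End Alg.

Section Mon.
Variables (K : fieldType) (T : unitAlgType K) (q : K) (N : nat) (y : nat -> T) (b : nat -> nat -> int).
Hypothesis qnz : q != 0.
Hypothesis hyu : forall i, (1 <= i <= N)%N -> y i \is a GRing.unit.
Hypothesis hb : forall i j, (1 <= i <= N)%N -> (1 <= j <= N)%N ->
  y j * y i = q ^ (b i j) *: (y i * y j).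

Definition P (s : seq nat) (u : nat -> int) : T := \prod_(i <- s) y i ^ u i.

Definition inr (s : seq nat) := forall i, i \in s -> (1 <= i <= N)%N.

Lemma P_unit s u : inr s -> P s u \is a GRing.unit.
Proof. move=> hs; apply: unitr_prod_in => i /hs hi _; exact: unitrXz (hyu hi). Qed.

Lemma mon_comm s u j m : inr s -> (1 <= j <= N)%N ->
  P s u * y j ^ m = q ^ (\sum_(i <- s) b j i * u i * m) *: (y j ^ m * P s u).
Proof.
move=> hs hj; elim: s hs => [|i s IH] hs.
  by rewrite /P !big_nil mulr1 mul1r expr0z scale1r.
have hi : (1 <= i <= N)%N by apply: hs; rewrite inE eqxx.
have hs' : inr s by move=> t ts; apply: hs; rewrite inE ts orbT.
rewrite /P !big_cons /= -/(P s u) -[_ * _ * y j ^ m]mulrA IH // -scalerAr [y i ^ _ * (_ * _)]mulrA.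
rewrite (comm_intpow qnz (hyu hi) (hyu hj) (hb hj hi)) -scalerAl scalerA -mulrA.
by rewrite -expfzDr // addrC [y j ^ m * (_ * _)]mulrA.
Qed.

Lemma P_mul s u v : inr s -> exists g : int,
  P s u * P s v = q ^ g *: P s (fun i => u i + v i).
Proof.
elim: s => [|i s IH] hs.
  by exists 0; rewrite /P !big_nil mulr1 expr0z scale1r.
have hi : (1 <= i <= N)%N by apply: hs; rewrite inE eqxx.
have hs' : inr s by move=> t ts; apply: hs; rewrite inE ts orbT.
have [g hg] := IH hs'.
exists (g + \sum_(t <- s) b i t * u t * v i).
rewrite /P !big_cons /= -/(P s u) -/(P s v) -/(P s (fun i => u i + v i)).
rewrite -[_ * _ * (_ * _)]mulrA [P s u * (_ * _)]mulrA (@mon_comm s u i (v i) hs' hi).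
rewrite -scalerAl -scalerAr -[_ * P s u * P s v]mulrA hg -!scalerAr scalerA.
rewrite [y i ^ u i * (_ * _)]mulrA -exprzDr ?hyu //.
by rewrite -expfzDr // addrC.
Qed.

Lemma P_ext s u v : (forall i, i \in s -> u i = v i) -> P s u = P s v.
Proof. by move=> h; apply: eq_big_seq => i /h ->. Qed.

Lemma P0 s : P s (fun _ => 0) = 1.
Proof. by rewrite /P big1 // => i _; rewrite expr0z. Qed.

Lemma P_inv s u : inr s -> exists g : int, (P s u)^-1 = q ^ g *: P s (fun i => - u i).
Proof.
move=> hs; have [g hg] := P_mul u (fun i => - u i) hs.
exists (- g).
have hu := P_unit u hs.
have e0 : P s (fun i => u i + - u i) = 1.
  by rewrite -(P0 s); apply: P_ext => i _; rewrite addrN.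
rewrite e0 in hg.
apply: (mulrI hu); rewrite mulrV // -scalerAr hg scalerA -expfzDr // addNr expr0z scale1r //.
Qed.

End Mon.

Lemma central_gen (K : fieldType) (T : unitAlgType K) (S : T -> Prop) z :
  (forall u, S u -> z * u = u * z) -> central_in (subalg_gen S) z.
Proof.
move=> h u; elim=> {u} [t /h //| c | a b _ ha _ hb | a b _ ha _ hb].
- by rewrite -scalerAr -scalerAl mulr1 mul1r.
- by rewrite mulrDr mulrDl ha hb.
- by rewrite mulrA ha -mulrA hb mulrA.
Qed.

Lemma scal_unit_eq (K : fieldType) (T : unitAlgType K) (c : K) (u : T) :
  u \is a GRing.unit -> c *: u = u -> c = 1.
Proof.
move=> hu h.
have h1 : c *: (1 : T) = 1 by rewrite -(mulrV hu) scalerAl h.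
apply/eqP; rewrite -subr_eq0; apply/negPn/negP => hc.
have : (1 : T) = 0.
  by rewrite -[1 : T](scale1r) -(mulVf hc) -scalerA scalerBl h1 scale1r subrr scaler0.
by apply/eqP; rewrite oner_neq0.
Qed.

Lemma inr_iota (K : fieldType) (T : unitAlgType K) N : inr N (iota 1 N).
Proof. by move=> i; rewrite mem_iota add1n ltnS. Qed.

Section Cent.
Variables (K : fieldType) (T : unitAlgType K) (q : K) (N : nat) (y : nat -> T) (b : nat -> nat -> int).
Hypothesis qnz : q != 0.
Hypothesis qnr : forall s : int, q ^ s = 1 -> s = 0.
Hypothesis hyu : forall i, (1 <= i <= N)%N -> y i \is a GRing.unit.
Hypothesis hb : forall i j, (1 <= i <= N)%N -> (1 <= j <= N)%N ->
  y j * y i = q ^ (b i j) *: (y i * y j).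

Lemma lmon_comm1 v j : (1 <= j <= N)%N ->
  lmon y N v * y j = q ^ (\sum_(i <- iota 1 N) b j i * v i) *: (y j * lmon y N v).
Proof.
move=> hj.
have := @mon_comm K T q N y b qnz hyu hb (iota 1 N) v j 1 (@inr_iota K T N) hj.
rewrite expr1z /lmon -/(P y (iota 1 N) v) => ->.
by congr (q ^ _ *: _); apply: eq_bigr => i _; rewrite mulr1.
Qed.

Lemma kernel_comm v (S : T -> Prop) :
  (forall u, S u -> exists2 j, (1 <= j <= N)%N & u = y j \/ u = (y j)^-1) ->
  (forall j, (1 <= j <= N)%N -> \sum_(i <- iota 1 N) b j i * v i = 0) ->
  central_in (subalg_gen S) (lmon y N v).
Proof.
move=> hS hv; apply: central_gen => u /hS [j hj [->|->]].
  by rewrite lmon_comm1 // hv // expr0z scale1r.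
apply: commrV; rewrite /GRing.comm.
by rewrite lmon_comm1 // hv // expr0z scale1r.
Qed.

Lemma comm_kernel v j : (1 <= j <= N)%N ->
  lmon y N v * y j = y j * lmon y N v -> \sum_(i <- iota 1 N) b j i * v i = 0.
Proof.
move=> hj h; apply: qnr.
have hu : y j * lmon y N v \is a GRing.unit.
  by rewrite unitrMr ?hyu //; exact: (@P_unit K T N y hyu _ _ (@inr_iota K T N)).
apply: (scal_unit_eq hu); by rewrite -lmon_comm1.
Qed.
End Cent.

Section LC.
Variables (K : fieldType) (T : unitAlgType K) (q : K) (N : nat) (y : nat -> T) (b : nat -> nat -> int).
Variables (l : nat) (e : nat -> nat -> int).
Hypothesis qnz : q != 0.
Hypothesis hyu : forall i, (1 <= i <= N)%N -> y i \is a GRing.unit.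
Hypothesis hb : forall i j, (1 <= i <= N)%N -> (1 <= j <= N)%N ->
  y j * y i = q ^ (b i j) *: (y i * y j).

Definition Lw (w : nat -> int) : Prop :=
  exists n : nat -> int, forall j, (1 <= j <= N)%N -> w j = \sum_(t <- iota 1 l) n t * e t j.

Lemma Lw0 : Lw (fun _ => 0).
Proof. by exists (fun _ => 0) => j _; rewrite big1 // => t _; rewrite mul0r. Qed.

Lemma LwD u v : Lw u -> Lw v -> Lw (fun i => u i + v i).
Proof.
move=> [n hn] [m hm]; exists (fun t => n t + m t) => j hj.
by rewrite hn // hm // -big_split; apply: eq_bigr => t _; rewrite mulrDl.
Qed.

Lemma LwN u : Lw u -> Lw (fun i => - u i).
Proof.
move=> [n hn]; exists (fun t => - n t) => j hj.
by rewrite hn // -sumrN; apply: eq_bigr => t _; rewrite mulNr.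
Qed.

Lemma Lwe i : (1 <= i <= l)%N -> Lw (e i).
Proof.
move=> hi; exists (fun t => (t == i)%:R) => j hj.
rewrite (bigD1_seq i) ?iota_uniq ?mem_iota ?add1n ?ltnS //=.
rewrite eqxx mul1r big1 ?addr0 // => t /negbTE ->; by rewrite mul0r.
Qed.

Lemma Lw_ext u v : (forall j, (1 <= j <= N)%N -> u j = v j) -> Lw u -> Lw v.
Proof. by move=> h [n hn]; exists n => j hj; rewrite -h // hn. Qed.

Inductive lc : T -> Prop :=
| lc0 : lc 0
| lcS (a : K) (w : nat -> int) t : Lw w -> lc t -> lc (a *: lmon y N w + t).

Lemma lc_add s t : lc s -> lc t -> lc (s + t).
Proof.
move=> hs ht; elim: hs => [|a w s' hw _ IH]; first by rewrite add0r.
by rewrite -addrA; apply: lcS.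
Qed.

Lemma lc_scale c t : lc t -> lc (c *: t).
Proof.
elim=> [|a w s' hw _ IH]; first by rewrite scaler0; apply: lc0.
by rewrite scalerDr scalerA; apply: lcS.
Qed.

Lemma lc_lmon_mul u t : Lw u -> lc t -> lc (lmon y N u * t).
Proof.
move=> hu; elim=> [|a w s' hw _ IH]; first by rewrite mulr0; apply: lc0.
rewrite mulrDr -scalerAr.
have [g hg] := @P_mul K T q N y b qnz hyu hb (iota 1 N) u w (@inr_iota K T N).
rewrite /lmon -/(P y (iota 1 N) u) -/(P y (iota 1 N) w) hg scalerA.
by apply: lcS => //; apply: LwD.
Qed.

Lemma lc_mul s t : lc s -> lc t -> lc (s * t).
Proof.
move=> hs ht; elim: hs => [|a w s' hw _ IH]; first by rewrite mul0r; apply: lc0.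
rewrite mulrDl -scalerAl; apply: lc_add => //; apply: lc_scale; exact: lc_lmon_mul.
Qed.

Lemma lc_gen t :
  subalg_gen (fun u => exists2 i, (1 <= i <= l)%N & u = lmon y N (e i) \/ u = (lmon y N (e i))^-1) t ->
  lc t.
Proof.
elim=> {t} [t [i hi [->|->]] | c | a b' _ ha _ hb' | a b' _ ha _ hb'].
- by rewrite -[lmon _ _ _]scale1r -[_ *: _]addr0; apply: lcS; [exact: Lwe | exact: lc0].
- have [g hg] := @P_inv K T q N y b qnz hyu hb (iota 1 N) (e i) (@inr_iota K T N).
  rewrite /lmon -/(P y (iota 1 N) (e i)) hg -[_ *: _]addr0; apply: lcS; last exact: lc0.
  by apply: LwN; apply: Lwe.
- have e1 : lmon y N (fun _ => 0) = 1 by rewrite /lmon -/(P y (iota 1 N) _) P0.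
  by rewrite -[c%:A]addr0 -e1; apply: lcS; [exact: Lw0 | exact: lc0].
- exact: lc_add.
- exact: lc_mul.
Qed.
End LC.

Section Ind.
Variables (K : fieldType) (T : unitAlgType K) (q : K) (N : nat) (y : nat -> T) (b : nat -> nat -> int).
Variables (l : nat) (e : nat -> nat -> int).
Hypothesis qnz : q != 0.
Hypothesis hyu : forall i, (1 <= i <= N)%N -> y i \is a GRing.unit.
Hypothesis hb : forall i j, (1 <= i <= N)%N -> (1 <= j <= N)%N ->
  y j * y i = q ^ (b i j) *: (y i * y j).

Local Notation d0 := (fun _ : nat => (0 : int)).
Local Notation lc := (@lc K T N y l e).
Local Notation Lw := (@Lw N l e).

Lemma lc_lists t : lc t -> exists (cs : seq K) (ms : seq (nat -> int)),
  [/\ size cs = size ms, (forall r, (r < size ms)%N -> Lw (nth d0 ms r)) &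
      t = \sum_(r < size cs) cs`_r *: lmon y N (nth d0 ms r)].
Proof.
elim=> [|a w t' hw _ [cs [ms [hsz hL ->]]]].
  by exists [::], [::]; split => //; rewrite big_ord0.
exists (a :: cs), (w :: ms); split => /=; first by rewrite hsz.
  by case=> [|r] //= hr; apply: hL.
by rewrite big_ord_recl.
Qed.

Definition key (w : nat -> int) : seq int := map w (iota 1 N).
Definition fo (s : seq int) : nat -> int := fun j => nth 0 s j.-1.

Lemma key_size w : size (key w) = N.
Proof. by rewrite size_map size_iota. Qed.

Lemma fo_key w j : (1 <= j <= N)%N -> fo (key w) j = w j.
Proof.
case/andP=> h1 h2.
have hj : (j.-1 < N)%N by rewrite -(prednK h1) in h2.
by rewrite /fo /key (nth_map 0) ?size_iota // nth_iota // add1n prednK.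
Qed.

Lemma lmon_fo w : lmon y N (fo (key w)) = lmon y N w.
Proof.
by apply: eq_big_seq => j; rewrite mem_iota add1n ltnS => hj; rewrite fo_key.
Qed.

Lemma mem_map_key s0 (ms : seq (nat -> int)) : s0 \in map key ms ->
  exists2 r, (r < size ms)%N & s0 = key (nth d0 ms r).
Proof.
elim: ms => [|w ms IH] //=; rewrite in_cons => /orP [/eqP ->| /IH [r hr ->]].
  by exists 0%N.
by exists r.+1.
Qed.

Lemma regroup (cs : seq K) (ms : seq (nat -> int)) : size cs = size ms ->
  \sum_(r < size cs) cs`_r *: lmon y N (nth d0 ms r) =
  \sum_(s <- undup (map key ms))
     (\sum_(r < size cs | key (nth d0 ms r) == s) cs`_r) *: lmon y N (fo s).
Proof.
move=> hsz.
transitivity (\sum_(s <- undup (map key ms)) \sum_(r < size cs)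
   (if key (nth d0 ms r) == s then cs`_r *: lmon y N (nth d0 ms r) else 0)); last first.
  apply: eq_bigr => s _; rewrite scaler_suml [RHS]big_mkcond /=.
  by apply: eq_bigr => r _; case: eqP => [<-|//]; rewrite lmon_fo.
rewrite exchange_big /=; apply: eq_bigr => r _.
have hmem : key (nth d0 ms r) \in undup (map key ms).
  rewrite mem_undup -(nth_map d0 (key d0)); last by rewrite -hsz.
  by apply: mem_nth; rewrite size_map -hsz.
rewrite (bigD1_seq _ hmem (undup_uniq _)) /= eqxx big1 ?addr0 // => s.
by rewrite eq_sym => /negbTE ->.
Qed.

Lemma lc_lmon_L (hind : lmon_independent y N) t v : lc t -> t = lmon y N v -> Lw v.
Proof.
move=> /lc_lists [cs [ms [hsz hL ht]]] htv.
case: (boolP (has (fun r => all (fun j => v j == nth d0 ms r j) (iota 1 N)) (iota 0 (size ms)))).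
  case/hasP => r; rewrite mem_iota add0n => hr /allP hall.
  apply: (Lw_ext _ (hL r hr)) => j hj; apply/esym/eqP; apply: hall.
  by rewrite mem_iota add1n ltnS.
move/hasPn => hno; exfalso.
set ks := undup (map key ms).
set C := fun s => \sum_(r < size cs | key (nth d0 ms r) == s) cs`_r.
have hks : forall s, s \in ks -> exists2 r, (r < size ms)%N & s = key (nth d0 ms r).
  by move=> s; rewrite mem_undup => /mem_map_key.
have := hind (1 :: map (fun s => - C s) ks) (v :: map fo ks).
rewrite /= !size_map => /(_ erefl).
have hv : forall a, a \in ks -> exists2 i, (1 <= i <= N)%N & v i <> fo a i.
  move=> a /hks [r hr ->].
  have := hno r; rewrite mem_iota add0n hr => /(_ isT) /allPn [j hj hne].
  have hj' : (1 <= j <= N)%N by move: hj; rewrite mem_iota add1n ltnS.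
  by exists j => //; rewrite fo_key //; apply/eqP.
have hsza : forall a, a \in ks -> size a = N by move=> a /hks [r _ ->]; rewrite key_size.
have hneq : forall a a', a \in ks -> a' \in ks -> a != a' ->
    exists2 i, (1 <= i <= N)%N & fo a i <> fo a' i.
  move=> a a' ha ha' hne.
  case: (boolP (all (fun j => fo a j == fo a' j) (iota 1 N))) => [/allP hall|].
    exfalso; move/negP: hne; apply; apply/eqP.
    apply: (@eq_from_nth _ 0); first by rewrite !hsza.
    move=> i; rewrite hsza // => hi.
    have := hall i.+1; rewrite mem_iota add1n ltnS ltnS hi => /(_ isT) /eqP.
    by rewrite /fo.
  case/allPn => j hj hne'; exists j; first by move: hj; rewrite mem_iota add1n ltnS.
  by apply/eqP.
have hnth : forall s, (s < size ks)%N -> nth [::] ks s \in ks by move=> s hs; apply: mem_nth.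
move=> H; refine (_ (H _ _)); first by rewrite /= oner_eq0.
- case=> [|u] [|u'] //=.
  + rewrite ltnS => hu'. rewrite (nth_map [::]) //. exact: hv (hnth _ hu').
  + rewrite !ltnS => /andP [huu' hu'].
    have hu : (u < size ks)%N by apply: ltn_trans hu'.
    rewrite !(nth_map [::]) //; apply: hneq; try exact: hnth.
    by rewrite nth_uniq ?undup_uniq // neq_ltn huu'.
- rewrite big_ord_recl /= scale1r.
  have -> : \sum_(i < size ks) (map (fun s => - C s) ks)`_i *: lmon y N (nth d0 (map fo ks) i) =
            - \sum_(s <- ks) C s *: lmon y N (fo s).
    rewrite (big_nth [::]) big_mkord -sumrN; apply: eq_bigr => i _.
    by rewrite !(nth_map [::]) // scaleNr.
  by rewrite -(regroup hsz) -ht htv subrr.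
Qed.
End Ind.

Lemma intr_sumE (I : Type) (r : seq I) (F : I -> int) :
  (\sum_(i <- r) F i)%:~R = \sum_(i <- r) (F i)%:~R :> rat.
Proof. by elim: r => [|i r IH]; rewrite ?big_nil ?big_cons // intrD IH. Qed.

Lemma intr_prodE (I : Type) (r : seq I) (P : pred I) (F : I -> int) :
  (\prod_(i <- r | P i) F i)%:~R = \prod_(i <- r | P i) (F i)%:~R :> rat.
Proof.
elim: r => [|i r IH]; rewrite ?big_nil ?big_cons //.
by case: (P i); rewrite ?intrM IH.
Qed.

Lemma sum_iota_ord (R : nmodType) (N : nat) (F : nat -> R) :
  \sum_(i <- iota 1 N) F i = \sum_(t < N) F t.+1.
Proof.
rewrite -[iota 1 N]/(iota (1+0) N) iotaDl big_map.
have -> : iota 0 N = index_iota 0 N by rewrite /index_iota subn0.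
rewrite big_mkord.
by apply: eq_bigr => t _; rewrite add1n.
Qed.

Lemma clear_den (N : nat) (x : 'I_N -> rat) :
  exists (w : 'I_N -> int) (d : rat), d != 0 /\ forall t, (w t)%:~R = x t * d.
Proof.
exists (fun t => numq (x t) * \prod_(s | s != t) denq (x s)), (\prod_s denq (x s))%:~R.
split.
  rewrite intr_eq0; apply/prodf_neq0 => s _; exact: denq_neq0.
move=> t /=; rewrite intrM numqE [in RHS](bigD1 t) //= intrM mulrA.
by [].
Qed.

Section Mat.
Variables (N : nat) (b : nat -> nat -> int).
Hypothesis bskew : forall i j, (1 <= i <= N)%N -> (1 <= j <= N)%N -> b j i = - b i j.

Definition Bo (u t : 'I_N) : rat := (b u.+1 t.+1)%:~R.

Lemma Bo_skew u t : Bo t u = - Bo u t.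
Proof. by rewrite /Bo bskew ?ltn_ord // mulrNz. Qed.

Definition MA (A : {set 'I_N}) : 'M[rat]_#|A| :=
  \matrix_(i, j) Bo (enum_val i) (enum_val j).

Lemma det_MA_odd (A : {set 'I_N}) : odd #|A| -> \det (MA A) = 0.
Proof.
move=> hodd.
have htr : (MA A)^T = (-1) *: MA A.
  by apply/matrixP => i j; rewrite !mxE Bo_skew mulN1r.
have := det_tr (MA A); rewrite htr detZ -signr_odd hodd expr1 mulN1r.
move=> h; have : 2%:R * \det (MA A) = 0 by rewrite mulr_natl mulr2n -{1}h addNr.
by move/eqP; rewrite mulf_eq0 pnatr_eq0 /= => /eqP.
Qed.

Lemma kernelA (A : {set 'I_N}) : \det (MA A) = 0 ->
  exists x : 'I_N -> rat, [/\ exists t, x t != 0, forall t, t \notin A -> x t = 0 &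
     forall u, u \in A -> \sum_t x t * Bo t u = 0].
Proof.
move/eqP/det0P => [v hv0 hv].
have [i0 hi0] : exists i0, v 0 i0 != 0.
  apply/existsP; apply: contraR hv0 => /existsPn h.
  by apply/eqP/matrixP => i j; rewrite ord1 mxE; apply/eqP/negPn/h.
have Ha0 : enum_val i0 \in A := enum_valP i0.
exists (fun t => if t \in A then v 0 (enum_rank_in Ha0 t) else 0); split.
- by exists (enum_val i0); rewrite Ha0 enum_valK_in.
- by move=> t /negbTE ->.
move=> u hu.
transitivity (\sum_(t in A) v 0 (enum_rank_in Ha0 t) * Bo t u).
  by rewrite [RHS]big_mkcond; apply: eq_bigr => t _; case: ifP => _; rewrite ?mul0r.
rewrite big_enum_val /=.
move/matrixP: hv => /(_ 0 (enum_rank_in Ha0 u)).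
rewrite !mxE => h; rewrite -[X in _ = X]h; apply: eq_bigr => i _.
by rewrite enum_valK_in !mxE enum_rankK_in.
Qed.

Definition ext (w : 'I_N -> int) (n : nat) : int :=
  if (0 < n)%N then oapp w 0 (insub n.-1) else 0.

Lemma ext_ord w (t : 'I_N) : ext w t.+1 = w t.
Proof. by rewrite /ext /= (valK t). Qed.

Lemma ext_in n : (1 <= n <= N)%N -> exists t : 'I_N, n = t.+1.
Proof.
case/andP=> h1 h2; have h : (n.-1 < N)%N by rewrite -(prednK h1) in h2.
by exists (Ordinal h); rewrite /= prednK.
Qed.

Lemma ext_out w n : ~~ (1 <= n <= N)%N -> ext w n = 0.
Proof.
rewrite /ext; case: n => [|n] //= hn.
by rewrite insubN.
Qed.

Lemma sum_ext (j : nat) (w : 'I_N -> int) :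
  \sum_(i <- iota 1 N) b j i * ext w i = \sum_(t < N) b j t.+1 * w t.
Proof. by rewrite sum_iota_ord; apply: eq_bigr => t _; rewrite ext_ord. Qed.

Lemma sum_cast (u : 'I_N) (w : 'I_N -> int) :
  (\sum_(i <- iota 1 N) b u.+1 i * ext w i)%:~R = \sum_t Bo u t * (w t)%:~R :> rat.
Proof. by rewrite sum_ext intr_sumE; apply: eq_bigr => t _; rewrite intrM. Qed.


Variables (l : nat) (e : nat -> nat -> int) (c : nat -> nat) (k : nat).
Hypothesis hc : forall t, (1 <= t <= l)%N -> (1 <= c t <= N)%N.
Hypothesis he : forall t s, (1 <= t <= l)%N -> (1 <= s <= l)%N -> e t (c s) = (t == s)%:R.
Hypothesis hker : forall t j, (1 <= t <= l)%N -> (1 <= j <= N)%N ->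
  \sum_(i <- iota 1 N) b j i * e t i = 0.
Hypothesis hrad : forall v : nat -> int,
  (forall j, (1 <= j <= N)%N -> \sum_(i <- iota 1 N) b j i * v i = 0) ->
  (forall t, (1 <= t <= l)%N -> v (c t) = 0) -> forall i, (1 <= i <= N)%N -> v i = 0.

Definition inD (t : 'I_N) := all (fun s => c s != t.+1) (iota 1 l).
Definition D := [set t : 'I_N | inD t].

Lemma notD (u : 'I_N) : u \notin D -> exists2 s, (1 <= s <= l)%N & c s = u.+1.
Proof.
rewrite inE => /allPn [s hs /negPn /eqP h]; exists s => //.
by move: hs; rewrite mem_iota add1n ltnS.
Qed.

Lemma detD : \det (MA D) != 0.
Proof.
apply/eqP => hdet; have [x [[t0 hx0] hxD hxk]] := kernelA hdet.
have hBx : forall u, \sum_t Bo u t * x t = 0.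
  move=> u.
  have hsk : \sum_t Bo u t * x t = - \sum_t x t * Bo t u.
    rewrite -sumrN; apply: eq_bigr => t _; by rewrite [Bo t u]Bo_skew mulrN opprK mulrC.
  rewrite hsk; case: (boolP (u \in D)) => hu; first by rewrite hxk // oppr0.
  have [s hs hcs] := notD hu.
  pose E (t : 'I_N) : rat := (e s t.+1)%:~R.
  have hE : forall u', \sum_t Bo u' t * E t = 0.
    move=> u'; have := @hker s u'.+1 hs (ltn_ord u').
    move=> h; have := congr1 (fun z : int => z%:~R : rat) h.
    rewrite /= sum_iota_ord intr_sumE mulr0z => h2; rewrite -[X in _ = X]h2.
    by apply: eq_bigr => t _; rewrite intrM.
  have h0 : 0 = \sum_t (\sum_u' x u' * Bo u' t) * E t.
    transitivity (\sum_u' x u' * \sum_t Bo u' t * E t).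
      by rewrite big1 // => u' _; rewrite hE mulr0.
    rewrite (eq_bigr (fun u' => \sum_t x u' * (Bo u' t * E t))); last by move=> *; rewrite big_distrr.
    rewrite exchange_big /=; apply: eq_bigr => t _; rewrite big_distrl /=.
    by apply: eq_bigr => u' _; rewrite mulrA.
  have h1 : \sum_t (\sum_u' x u' * Bo u' t) * E t = (\sum_u' x u' * Bo u' u) * E u.
    rewrite [LHS](bigD1 u) //= [X in _ + X]big1 ?addr0 //.
    move=> t htu; case: (boolP (t \in D)) => ht; first by rewrite hxk // mul0r.
    have [s' hs' hcs'] := notD ht.
    rewrite /E -hcs' he //; case: eqP => [hss'|]; last by rewrite mulr0.
    exfalso; move/negP: htu; apply; apply/eqP/val_inj/succn_inj.
    by rewrite -hcs -hcs' hss'.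
  move: h0; rewrite h1 /E -hcs he // eqxx mulr1 => h0; rewrite -h0; exact: oppr0.
have [w [d [hd hw]]] := clear_den x.
have hBxd : forall u : 'I_N, \sum_(i <- iota 1 N) b u.+1 i * ext w i = 0.
  move=> u; apply/eqP; rewrite -(@intr_eq0 rat) sum_cast.
  rewrite (eq_bigr (fun t => Bo u t * x t * d)); last by move=> t _; rewrite hw mulrA.
  by rewrite -big_distrl /= hBx mul0r.
have H1 : forall j, (1 <= j <= N)%N -> \sum_(i <- iota 1 N) b j i * ext w i = 0.
  by move=> j /ext_in [u ->]; apply: hBxd.
have H2 : forall t, (1 <= t <= l)%N -> ext w (c t) = 0.
  move=> t ht; have [u hu] := ext_in (hc ht); rewrite hu ext_ord.
  have huD : u \notin D.
    rewrite inE; apply/allPn; exists t; first by rewrite mem_iota add1n ltnS.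
    by rewrite hu eqxx.
  by apply/eqP; rewrite -(@intr_eq0 rat) hw hxD // mul0r.
have := hrad H1 H2 (i := t0.+1) (ltn_ord t0); rewrite ext_ord => hw0.
move: (hw t0); rewrite hw0 mulr0z => /esym/eqP; rewrite mulf_eq0 (negbTE hx0) (negbTE hd).
by [].
Qed.


Lemma linalg_main (hk : (1 <= k <= N)%N) (hkC : all (fun t => c t != k) (iota 1 l)) :
  let inS i := [&& (1 <= i <= N)%N, i != k & all (fun t => c t != i) (iota 1 l)] in
  exists m : nat -> int, [/\ exists2 i, inS i & m i != 0,
     forall i, ~~ inS i -> m i = 0 &
     forall j, inS j -> \sum_(i <- iota 1 N) b j i * m i = 0].
Proof.
move=> inS.
have hkN : (k.-1 < N)%N by case/andP: hk => h1 h2; rewrite -(prednK h1) in h2.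
pose k0 : 'I_N := Ordinal hkN.
have hk0 : k0.+1 = k by rewrite /= prednK //; case/andP: hk.
have hk0D : k0 \in D by rewrite inE /inD hk0.
pose S := D :\ k0.
have hSodd : odd #|S|.
  have := cardsD1 k0 D; rewrite hk0D add1n => hcard.
  have := detD; apply: contraR => hodd.
  by rewrite (det_MA_odd (A := D)) // hcard /= hodd.
have hinS : forall t : 'I_N, inS t.+1 = (t \in S).
  move=> t; rewrite /inS /S !inE ltn_ord /=; congr (_ && _).
  by rewrite -hk0 eqSS; congr (~~ _); apply/eqP/eqP => [->|/val_inj ->].
have [x [[t0 hx0] hxS hxk]] := kernelA (det_MA_odd hSodd).
have [w [d [hd hw]]] := clear_den x.
exists (ext w); split.
- have ht0 : t0 \in S by apply: contraR hx0 => /hxS ->.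
  exists t0.+1; first by rewrite hinS.
  rewrite ext_ord; apply: contraNneq hx0 => hw0.
  by move: (hw t0); rewrite hw0 mulr0z => /esym/eqP; rewrite mulf_eq0 (negbTE hd) orbF.
- move=> i hi; case: (boolP (1 <= i <= N)%N) => hiN; last exact: ext_out.
  have [t ht] := ext_in hiN; rewrite ht ext_ord; rewrite ht hinS in hi.
  by apply/eqP; rewrite -(@intr_eq0 rat) hw hxS // mul0r.
- move=> j hj.
  have hjN : (1 <= j <= N)%N by case/andP: hj.
  have [u hu] := ext_in hjN; rewrite hu in hj *; rewrite hinS in hj.
  apply/eqP; rewrite -(@intr_eq0 rat) sum_cast.
  rewrite (eq_bigr (fun t => Bo u t * x t * d)); last by move=> t _; rewrite hw mulrA.
  rewrite -big_distrl /=.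
  have -> : \sum_t Bo u t * x t = - \sum_t x t * Bo t u.
    rewrite -sumrN; apply: eq_bigr => t _; by rewrite [Bo t u]Bo_skew mulrN opprK mulrC.
  by rewrite hxk // oppr0 mul0r.
Qed.
End Mat.

Theorem lemma5p1 (K : fieldType) (charK0 : [pchar K] =i pred0)
  (T : unitAlgType K) (N n : nat) (x : nat -> T) (sg d : nat -> T -> T)
  (lam : nat -> nat -> K) (q : K) (a : nat -> nat -> int)
  (act : ('I_n -> K) -> T -> T) (w : nat -> 'I_n -> int)
  (mu : nat -> nat) (y : nat -> T)
  (hQNA : uniparameter_QNA x N sg d lam q a act w)
  (hGY : GY_elements x N act mu y)
  (hT : assoc_quantum_torus x N q y)
  (l : nat) (e : nat -> nat -> int) (c : nat -> nat)
  (hH : hypothesisH x N mu y l e c)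
  (k : nat) (hk : (1 <= k <= N)%N) (hkC : all (fun i => c i != k) (iota 1 l)) :
  let inS i := [&& (1 <= i <= N)%N, i != k & all (fun t => c t != i) (iota 1 l)] in
  exists m : nat -> int,
    (exists2 i, inS i & m i != 0) /\
    central_in (subalg_gen (fun u => exists2 i, inS i & u = y i \/ u = (y i)^-1))
      (\prod_(i <- iota 1 N | inS i) y i ^ m i).
Proof.
move=> inS.
case: hQNA => _ [_ [qnz qnr0 _ _] _].
have qnr : forall s : int, q ^ s = 1 -> s = 0.
  case=> [[|m]|m] //.
    by move=> h; change (q ^+ m.+1 = 1) in h; have := qnr0 m.+1 isT; rewrite h eqxx.
  move=> h; change ((q ^+ m.+1)^-1 = 1) in h; move/eqP: h; rewrite invr_eq1 => /eqP h.
  by have := qnr0 m.+1 isT; rewrite h eqxx.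
case: hT => hyu _ [b hb] hgen hind.
have bskew : forall i j, (1 <= i <= N)%N -> (1 <= j <= N)%N -> b j i = - b i j.
  move=> i j hi hj.
  have hu : y j * y i \is a GRing.unit by rewrite unitrMr ?hyu.
  have : q ^ (b i j + b j i) *: (y j * y i) = y j * y i.
    by rewrite expfzDr // -scalerA -hb // -hb.
  move/(scal_unit_eq hu)/qnr => /eqP; rewrite addr_eq0 => /eqP ->; by rewrite opprK.
move: hH; rewrite /hypothesisH => -[hsupp [hzc hzgen _] [hcS _] _ [he _]].
have hc : forall t, (1 <= t <= l)%N -> (1 <= c t <= N)%N by move=> t /hcS /andP [].
have hker : forall t j, (1 <= t <= l)%N -> (1 <= j <= N)%N ->
    \sum_(i <- iota 1 N) b j i * e t i = 0.
  move=> t j ht hj; apply: (comm_kernel qnz qnr hyu hb hj); exact: (hzc t ht).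
have hrad : forall v : nat -> int,
  (forall j, (1 <= j <= N)%N -> \sum_(i <- iota 1 N) b j i * v i = 0) ->
  (forall t, (1 <= t <= l)%N -> v (c t) = 0) -> forall i, (1 <= i <= N)%N -> v i = 0.
  move=> v hv hvc.
  have hcent : central_in (fun _ => True) (lmon y N v).
    move=> u _; apply: (kernel_comm qnz hyu hb (S := fun u => exists2 j, (1 <= j <= N)%N & u = y j \/ u = (y j)^-1)) => //.
  have hlc := lc_gen qnz hyu hb (hzgen _ hcent).
  have [nn hnn] := lc_lmon_L hind hlc erefl.
  have hn0 : forall s, (1 <= s <= l)%N -> nn s = 0.
    move=> s hs; rewrite -(hvc s hs) hnn ?hc //.
    rewrite (bigD1_seq s) ?iota_uniq ?mem_iota ?add1n ?ltnS //= he // eqxx mulr1.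
    rewrite big_seq_cond big1 ?addr0 // => t /andP [ht /negbTE hts].
    by move: ht; rewrite mem_iota add1n ltnS => ht; rewrite he // hts mulr0.
  move=> i hi; rewrite hnn // big_seq big1 // => t; rewrite mem_iota add1n ltnS => ht.
  by rewrite hn0 // mul0r.
have [m [hm1 hm0 hmk]] := linalg_main bskew hc he hker hrad hk hkC.
exists m; split; first exact: hm1.
have -> : \prod_(i <- iota 1 N | inS i) y i ^ m i = lmon y N m.
  rewrite /lmon big_mkcond; apply: eq_bigr => i _.
  by case: ifP => // /negbT /hm0 ->; rewrite expr0z.
apply: central_gen => u [j hj [->|->]].
  have hjN : (1 <= j <= N)%N by case/andP: hj.
  by rewrite (lmon_comm1 qnz hyu hb m hjN) hmk // expr0z scale1r.
have hjN : (1 <= j <= N)%N by case/andP: hj.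
apply: commrV; rewrite /GRing.comm.
by rewrite (lmon_comm1 qnz hyu hb m hjN) hmk // expr0z scale1r.
Qed.
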